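(* Fix an integer $D\ge 21$. For a positive integer $n$, let $k=k(n)=\left\lceil \frac{3n\ln D}{D}\right\rceil$. Then the proportion of configurations $F\in\mathcal{F}_D(n)$ for which the multigraph $\pi(F)$ has an induced matching of size $k$ tends to $0$ as $n\to\infty$.
   Context: Let $n,D$ be positive integers and let $V_n=\{v_1,\dots,v_{nD}\}$ and $W_n=\{w_1,\dots,w_{nD}\}$ be disjoint sets. A configuration (of order $n$ and degree $D$) is a perfect matching between $V_n$ and $W_n$ (each edge has one end in $V_n$ and one in $W_n$); $\mathcal{F}_D(n)$ is the set of all $(Dn)!$ configurations. For $F\in\mathcal{F}_D(n)$, $\pi(F)$ is the $D$-regular bipartite multigraph with parts $X=\{x_1,\dots,x_n\}$ and $Y=\{y_1,\dots,y_n\}$ obtained by identifying, for each $j\in[n]$, the points $v_{D(j-1)+1},\dots,v_{Dj}$ into the vertex $x_j$ and the points $w_{D(j-1)+1},\dots,w_{Dj}$ into the vertex $y_j$; each pair of $F$ becomes an edge (parallel edges allowed). An induced matching of size $k$ in $\pi(F)$ is a set of $k$ pairwise vertex-disjoint edges such that the sub-multigraph of $\pi(F)$ induced on their $2k$ endpoints consists exactly of these $k$ edges (each of multiplicity one). $\ln$ is the natural logarithm. *)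

(* Defs.v *)
From HB Require Import structures.
From mathcomp Require Import all_boot all_order all_fingroup all_algebra.
From mathcomp Require Import all_classical all_reals all_analysis.
Set Implicit Arguments. Unset Strict Implicit. Unset Printing Implicit Defensive.
Import Order.TTheory GRing.Theory Num.Theory.

(* A configuration of order n and degree D is a perfect matching between
   V_n = {v_0,...,v_{nD-1}} and W_n = {w_0,...,w_{nD-1}} (0-indexed);
   we encode it as the bijection F : 'I_(n*D) -> 'I_(n*D), v_i matched to w_(F i).
   Point v_i is identified into vertex x_(i %/ D), point w_j into y_(j %/ D). *)
Definition config (D n : nat) := {perm 'I_(n * D)}.

Definition mult (D n : nat) (F : config D n) (a b : nat) : nat :=
  #|[set i : 'I_(n * D) | (i %/ D == a) && (F i %/ D == b)]|.

(* S : a set of vertex pairs (x_a, y_b) of pi(F) is an induced matching: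
   edges pairwise vertex-disjoint, and the sub-multigraph induced on the
   endpoints consists exactly of the edges of S, each with multiplicity one
   (pi(F) is bipartite, so only X-Y pairs can carry edges). *)
Definition induced_matching (D n : nat) (F : config D n)
    (S : {set 'I_n * 'I_n}) : bool :=
  [forall p in S, forall q in S,
      (p != q) ==> ((p.1 != q.1) && (p.2 != q.2))] &&
  [forall p in S, forall q in S,
      mult F (val p.1) (val q.2) == (p == q : nat)].

Definition has_induced_matching (D n : nat) (F : config D n) (k : nat) : bool :=
  [exists S : {set 'I_n * 'I_n}, (#|S| == k) && induced_matching F S].

Local Open Scope ring_scope.

Definition kk {R : realType} (D n : nat) : nat :=
  `|Num.ceil (3 * n%:R * ln (D%:R : R) / D%:R)|%N.

Definition proportion {R : realType} (D n : nat) : R :=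
  #|[set F : config D n | has_induced_matching F (@kk R D n)]|%:R
    / ((n * D)`!)%:R.

(* Main.v *)
Require Import Defs.
From HB Require Import structures.
From mathcomp Require Import all_boot all_order all_fingroup all_algebra.
From mathcomp Require Import all_classical all_reals all_analysis.
From mathcomp Require Import zify ring lra.
Import Order.TTheory GRing.Theory Num.Theory.
Import numFieldNormedType.Exports.

Section Comb.
Set Implicit Arguments. Unset Strict Implicit. Unset Printing Implicit Defensive.
Lemma perm_count N (T C : {set 'I_N}) :
  #|[set F : {perm 'I_N} | [forall i in T, F i \in C]]| <=
  #|C| ^_ #|T| * (N - #|T|)`!.
Proof.
pose Ts := {x : 'I_N | x \in T}.
pose Phi (F : {perm 'I_N}) : {ffun Ts -> 'I_N} := [ffun x => F (val x)].
pose Inj := [set f : {ffun Ts -> 'I_N} in ffun_on (mem C) | injectiveb f].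
have cI : #|Inj| = #|C| ^_ #|T|.
  by rewrite /Inj card_inj_ffuns_on card_sig.
rewrite -cI -sum1_card.
rewrite (partition_big Phi (mem Inj)); last first.
  move=> F; rewrite inE => /forallP HF; rewrite /Inj !inE; apply/andP; split.
    apply/ffun_onP => x; rewrite ffunE; have := HF (val x).
    by rewrite (valP x) /= => ->.
  apply/injectiveP => x y; rewrite !ffunE => /perm_inj /val_inj.
  done.
rewrite -sum_nat_const; apply: leq_sum => g _.
case: (pickP [pred F : {perm 'I_N} | (F \in [set F : {perm 'I_N} | [forall i in T, F i \in C]]) && (Phi F == g)]) => [F0 HF0|none]; last first.
  by rewrite big_pred0.
move: HF0 => /andP [_ /eqP HF0].
rewrite sum1_card.
have -> : (N - #|T|)`! = #|perm_on (~: T)|.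
  rewrite card_perm; congr (_ `!); have := cardsC T; rewrite card_ord => HN.
  by rewrite -{1}HN addKn.
rewrite -(card_imset _ (@mulIg _ (F0^-1)%g)).
apply: subset_leq_card; apply/fintype.subsetP => G /imsetP [F HF ->].
move: HF; rewrite unfold_in => /andP [_ /eqP HF].
apply/fintype.subsetP => x; rewrite inE permM => Hx; rewrite inE; apply: contra Hx => xT.
have : Phi F (Sub x xT) = Phi F0 (Sub x xT) by rewrite HF HF0.
rewrite !ffunE /= => ->.
by rewrite -permM mulgV perm1.
Qed.

Definition Cset D n (B : {set 'I_n}) : {set 'I_(n*D)} :=
  [set j : 'I_(n*D) | [forall b in B, j %/ D != val b]].
Definition Tset D n (A : {set 'I_n}) (h : {ffun 'I_n -> 'I_D}) : {set 'I_(n*D)} :=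
  [set i : 'I_(n*D) | [exists a in A, (i %/ D == val a) && (i %% D != val (h a))]].
Definition Good D n A B h : {set config D n} :=
  [set F : config D n | [forall i in @Tset D n A h, F i \in @Cset D n B]].

Lemma witness D n (r0 : 'I_D) (F : config D n) k :
  has_induced_matching F k ->
  exists (A B : {set 'I_n}) (h : {ffun 'I_n -> 'I_D}), [/\ #|A| = k, #|B| = k, h \in pffun_on r0 A [set: 'I_D] &
     F \in @Good D n A B h].
Proof.
have D0 : 0 < D := leq_ltn_trans (leq0n _) (ltn_ord r0).
case/existsP => S /andP [/eqP cS /andP [/forallP c1 /forallP c2]].
have c1' : forall p q, p \in S -> q \in S -> p != q -> (p.1 != q.1) && (p.2 != q.2).
  move=> p q pS qS; move: (c1 p); rewrite pS /= => /forallP /(_ q).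
  by rewrite qS /= => /implyP.
have c2' : forall p q, p \in S -> q \in S -> mult F (val p.1) (val q.2) = (p == q).
  move=> p q pS qS; move: (c2 p); rewrite pS /= => /forallP /(_ q).
  by rewrite qS /= => /eqP.
pose A := [set p.1 | p in S]; pose B := [set p.2 | p in S].
pose pk (a : 'I_n) := [pick i : 'I_(n*D) | (i %/ D == val a) &&
                          [exists b in B, F i %/ D == val b]].
pose h := [ffun a => if a \in A then
              (if pk a is Some i then Ordinal (ltn_pmod i D0) else r0) else r0].
exists A, B, h; split.
- rewrite card_in_imset // => p q pS qS e; apply/eqP; apply: contraT => ne.
  by move: (c1' p q pS qS ne); rewrite e eqxx.
- rewrite card_in_imset // => p q pS qS e; apply/eqP; apply: contraT => ne.
  by move: (c1' p q pS qS ne); rewrite e eqxx andbF.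
- apply/pffun_onP; split; last by move=> x; rewrite inE.
  apply/fintype.subsetP => x; rewrite inE /h ffunE.
  by case: (x \in A) => //; rewrite eqxx.
rewrite inE; apply/forallP => i; apply/implyP; rewrite inE => /existsP [a /andP [aA /andP [/eqP ia ha]]].
rewrite inE; apply/forallP => b; apply/implyP => bB; apply/negP => /eqP Fib.
move: ha; rewrite /h ffunE aA /pk.
case: pickP => [j /andP [/eqP ja /existsP [b' /andP [b'B /eqP Fjb']]] | none]; last first.
  move: (none i); rewrite /= ia eqxx /= => H; move: H.
  suff -> : [exists b0 in B, F i %/ D == b0] by [].
  by apply/existsP; exists b; rewrite bB Fib eqxx.
rewrite /= => /negP; apply; apply/eqP; congr (_ %% D).
move: aA bB b'B => /imsetP [p pS ap] /imsetP [q qS bq] /imsetP [q' q'S bq'].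
have Mi : 0 < mult F (val a) (val b).
  by rewrite /mult card_gt0; apply/set0Pn; exists i; rewrite inE ia Fib !eqxx.
have Mj : 0 < mult F (val a) (val b').
  by rewrite /mult card_gt0; apply/set0Pn; exists j; rewrite inE ja Fjb' !eqxx.
move: Mi Mj; rewrite ap bq bq' !c2' //.
case: (p =P q) => [Epq|] //; case: (p =P q') => [Epq'|] // _ _.
rewrite -Epq in bq; rewrite -Epq' in bq'.
have : mult F (val p.1) (val p.2) = 1 by rewrite c2' // eqxx.
rewrite /mult => /eqP; rewrite eqn_leq => /andP [/card_le1_eqP H _].
apply: (congr1 val); apply: H; rewrite inE.
  by rewrite ja Fjb' -ap -bq' !eqxx.
by rewrite ia Fib -ap -bq !eqxx.
Qed.

Lemma idx_lt D n (a : 'I_n) (r : 'I_D) : a * D + r < n * D.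
Proof.
have := ltn_ord a; have := ltn_ord r => hr ha.
apply: (@leq_trans (a.+1 * D)); first by rewrite mulSn addnC ltn_add2r.
by rewrite leq_mul2r ha orbT.
Qed.

Definition idx D n (p : 'I_n * 'I_D) : 'I_(n*D) := Ordinal (idx_lt p.1 p.2).

Lemma idx_div D n (p : 'I_n * 'I_D) : idx p %/ D = p.1.
Proof. by rewrite /= divnMDl ?divn_small ?addn0 //; case: p => a r; exact: leq_ltn_trans (leq0n _) (ltn_ord r). Qed.

Lemma idx_mod D n (p : 'I_n * 'I_D) : idx p %% D = p.2.
Proof. by rewrite /= modnMDl modn_small. Qed.

Lemma idx_inj D n : injective (@idx D n).
Proof.
move=> p q e; have e1 := idx_div p; have e2 := idx_mod p.
rewrite e idx_div idx_mod in e1 e2 *.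
by case: p q e1 e2 {e} => [a r] [b s] /= /val_inj -> /val_inj ->.
Qed.

Lemma card_Cset D n (B : {set 'I_n}) : #|@Cset D n B| <= n * D - #|B| * D.
Proof.
have H : (@idx D n) @: (finset.setX B [set: 'I_D]) \subset ~: @Cset D n B.
  apply/fintype.subsetP => x /imsetP [p]; rewrite inE => /andP [pB _] ->.
  rewrite !inE negb_forall; apply/existsP; exists p.1; by rewrite pB /= idx_div eqxx.
have := subset_leq_card H; rewrite card_imset; last exact: idx_inj.
rewrite cardsX cardsT card_ord.
have := cardsC (@Cset D n B); rewrite card_ord; move: #|Cset D B| #|~: Cset D B| => u v; move: (#|B| * D) (n * D) => x y; lia.
Qed.

Lemma card_Tset D n (A : {set 'I_n}) (h : {ffun 'I_n -> 'I_D}) :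
  #|A| * D - #|A| <= #|@Tset D n A h|.
Proof.
pose X := finset.setX A [set: 'I_D] :\: [set (a, h a) | a in A].
have H : (@idx D n) @: X \subset @Tset D n A h.
  apply/fintype.subsetP => x /imsetP [p]; rewrite !inE => /andP [pn /andP [pA _]] ->.
  apply/existsP; exists p.1; rewrite pA idx_div idx_mod eqxx /=.
  apply: contra pn => /eqP e; apply/imsetP; exists p.1 => //.
  by case: p e {pA} => a r /= /val_inj ->.
have := subset_leq_card H; rewrite card_imset; last exact: idx_inj.
apply: leq_trans; rewrite cardsD cardsX cardsT card_ord.
have -> : finset.setX A [set: 'I_D] :&: [set (a, h a) | a in A] = [set (a, h a) | a in A].
  apply/finset.setIidPr; apply/fintype.subsetP => x /imsetP [a aA ->]; by rewrite !inE aA.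
by rewrite card_imset // => a b [] ->.
Qed.

Lemma ffact_ratio c N t : c <= N -> c ^_ t * N ^ t <= N ^_ t * c ^ t.
Proof.
move=> cN; elim: t => [|t IH]; first by rewrite !ffactn0 !expn0.
rewrite !ffactnSr !expnSr.
have H : (c - t) * N <= (N - t) * c.
  rewrite !mulnBl; apply: leq_sub; first by rewrite mulnC.
  by rewrite leq_mul2l cN orbT.
have -> : c ^_ t * (c - t) * (N ^ t * N) = (c ^_ t * N ^ t) * ((c - t) * N) by ring.
have -> : N ^_ t * (N - t) * (c ^ t * c) = (N ^_ t * c ^ t) * ((N - t) * c) by ring.
exact: leq_mul.
Qed.

Lemma ratio_bound G c t N c0 t0 : G <= c ^_ t * (N - t)`! -> t <= N -> c <= c0 ->
  c0 <= N -> t0 <= t -> 0 < N -> G * N ^ t0 <= c0 ^ t0 * N`!.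
Proof.
move=> HG tN cc0 c0N t0t N0.
have cN : c <= N by apply: leq_trans c0N.
have F1 : G * N ^_ t <= c ^_ t * N`!.
  rewrite -(ffact_fact tN).
  have -> : c ^_ t * (N ^_ t * (N - t)`!) = (c ^_ t * (N - t)`!) * N ^_ t by ring.
  by rewrite leq_mul2r HG orbT.
have F2 : G * N ^ t <= c ^ t * N`!.
  have P : 0 < N ^_ t by rewrite ffact_gt0.
  rewrite -(leq_pmul2l P).
  have R := @ffact_ratio c N t cN.
  apply: (@leq_trans (c ^_ t * N ^ t * N`!)).
    have -> : N ^_ t * (G * N ^ t) = (G * N ^_ t) * N ^ t by ring.
    have -> : c ^_ t * N ^ t * N`! = (c ^_ t * N`!) * N ^ t by ring.
    by rewrite leq_mul2r F1 orbT.
  have -> : N ^_ t * (c ^ t * N`!) = (N ^_ t * c ^ t) * N`! by ring.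
  by rewrite leq_mul2r R orbT.
have F3 : c ^ t * N ^ t0 <= c0 ^ t0 * N ^ t.
  rewrite -(subnKC t0t) !expnD.
  have -> : c0 ^ t0 * (N ^ t0 * N ^ (t - t0)) = (c0 ^ t0 * N ^ (t - t0)) * N ^ t0 by ring.
  rewrite leq_mul2r; apply/orP; right.
  have X : forall a b e, a <= b -> a ^ e <= b ^ e.
    by move=> a b e ab; elim: e => // e IH; rewrite !expnS; apply: leq_mul.
  by apply: leq_mul; apply: X.
have P : 0 < N ^ t by rewrite expn_gt0 N0.
rewrite -(leq_pmul2l P).
apply: (@leq_trans (c ^ t * N ^ t0 * N`!)).
  have -> : N ^ t * (G * N ^ t0) = (G * N ^ t) * N ^ t0 by ring.
  have -> : c ^ t * N ^ t0 * N`! = (c ^ t * N`!) * N ^ t0 by ring.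
  by rewrite leq_mul2r F2 orbT.
have -> : N ^ t * (c0 ^ t0 * N`!) = (c0 ^ t0 * N ^ t) * N`! by ring.
by rewrite leq_mul2r F3 orbT.
Qed.

Lemma sum_ge (I : finType) (P : pred I) (f : I -> nat) i :
  P i -> f i <= \sum_(j | P j) f j.
Proof. by move=> Pi; rewrite (bigD1 i) //= leq_addr. Qed.

Lemma union_bound D n k (r0 : 'I_D) :
  #|[set F : config D n | has_induced_matching F k]| <=
  \sum_(A in [set A : {set 'I_n} | #|A| == k])
   \sum_(B in [set A : {set 'I_n} | #|A| == k])
    \sum_(h in pffun_on r0 A [set: 'I_D]) #|@Good D n A B h|.
Proof.
rewrite -sum1_card.
apply: (@leq_trans (\sum_(F in [set F : config D n | has_induced_matching F k])
  \sum_(A in [set A : {set 'I_n} | #|A| == k])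
   \sum_(B in [set A : {set 'I_n} | #|A| == k])
    \sum_(h in pffun_on r0 A [set: 'I_D]) (F \in @Good D n A B h) : nat)).
  apply: leq_sum => F; rewrite inE => /(witness r0) [A [B [h [cA cB hp FG]]]].
  apply: (leq_trans _ (sum_ge _ (_ : A \in [set A : {set 'I_n} | #|A| == k]))); last by rewrite inE cA.
  apply: (leq_trans _ (sum_ge _ (_ : B \in [set A : {set 'I_n} | #|A| == k]))); last by rewrite inE cB.
  apply: (leq_trans _ (sum_ge _ hp)).
  by rewrite FG.
rewrite exchange_big; apply: leq_sum => A _.
rewrite exchange_big; apply: leq_sum => B _.
rewrite exchange_big; apply: leq_sum => h _.
rewrite -sum1_card big_mkcond [X in _ <= X]big_mkcond /=.
apply: leq_sum => F _.
by case: (F \in _); case: (F \in _).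
Qed.

Lemma count_bound D n k (r0 : 'I_D) : 0 < n ->
  #|[set F : config D n | has_induced_matching F k]| * (n * D) ^ (k * D - k)
  <= 'C(n, k) * ('C(n, k) * (D ^ k * ((n * D - k * D) ^ (k * D - k) * (n * D)`!))).
Proof.
move=> n0.
have D0 : 0 < D := leq_ltn_trans (leq0n _) (ltn_ord r0).
apply: (leq_trans (leq_mul (@union_bound D n k r0) (leqnn _))).
have E : 'C(n, k) = #|[set A : {set 'I_n} | #|A| == k]| by rewrite card_draws card_ord.
rewrite big_distrl /= {1}E -sum_nat_const.
apply: leq_sum => A; rewrite inE => /eqP cA.
rewrite big_distrl /= E -sum_nat_const.
apply: leq_sum => B; rewrite inE => /eqP cB.
rewrite big_distrl /=.
have -> : D ^ k = #|pffun_on r0 A [set: 'I_D]| by rewrite card_pffun_on cardsT card_ord cA.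
rewrite -sum_nat_const; apply: leq_sum => h _.
apply: (ratio_bound (perm_count _ _)).
- by rewrite -[X in _ <= X](card_ord (n * D)) max_card.
- by have := card_Cset D B; rewrite cB.
- exact: leq_subr.
- by have := card_Tset A h; rewrite cA.
- by rewrite muln_gt0 n0 D0.
Qed.

End Comb.
Unset Implicit Arguments.

Local Open Scope ring_scope.

Lemma e_le3 (R : realType) : expR (1 : R) <= 3.
Proof.
have h1 : 5 / 6 <= expR (- (1 / 6) : R).
  by have := expR_ge1Dx (- (1/6) : R); apply: le_trans; lra.
have h2 : (5 / 6) ^+ 6 <= expR (- 1 : R).
  have -> : (- 1 : R) = 6%:R * (- (1/6)) by lra.
  rewrite expRM_natl; apply: lerXn2r => //; rewrite ?nnegrE //; lra.
rewrite -[expR 1]invrK -expRN.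
have p : 0 < expR (- 1 : R) := expR_gt0 _.
rewrite -[3]invrK; rewrite lef_pV2 ?posrE //; last lra.

Qed.

Lemma ln_ge2 (R : realType) (D : nat) : (21 <= D)%N -> 2 <= ln (D%:R : R).
Proof.
move=> hD.
have D0 : (0 : R) < D%:R by rewrite ltr0n; lia.
rewrite -(ler_expR) lnK ?posrE //.
have -> : (2 : R) = 2%:R * 1 by rewrite mulr1.
rewrite expRM_natl.
apply: (@le_trans _ _ (3 ^+ 2)).
  by apply: lerXn2r; rewrite ?nnegrE ?expR_ge0 // ?e_le3.
have : (21%:R : R) <= D%:R by rewrite ler_nat.
lra.
Qed.

Lemma ln_le (R : realType) (D : nat) : (21 <= D)%N -> ln (D%:R : R) <= 8 * D%:R / 21.
Proof.
move=> hD.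
have D0 : (0 : R) < D%:R by rewrite ltr0n; lia.
have h3 : ln (3 : R) <= 2.
  have := @le_ln1Dx R 2; rewrite (_ : 1 + 2 = 3); last lra. by apply; lra.
have h := @le_ln1Dx R (D%:R / 3 - 1).
have -> : (D%:R : R) = 3 * (1 + (D%:R / 3 - 1)) by field.
rewrite lnM ?posrE //; last lra.
have : (21%:R : R) <= D%:R by rewrite ler_nat.
have := h ltac:(lra).
lra.
Qed.

Lemma exp87 (R : realType) : expR (8 / 7 : R) < 4.
Proof.
have e8 : expR (8 / 7 : R) ^+ 7 <= 3 ^+ 8.
  rewrite -expRM_natl (_ : 7%:R * (8 / 7) = 8%:R * 1); last by field.
  by rewrite expRM_natl; apply: lerXn2r; rewrite ?nnegrE ?expR_ge0 // ?e_le3.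
rewrite ltNge; apply/negP => h.
have : (4 : R) ^+ 7 <= expR (8 / 7) ^+ 7.
  by apply: lerXn2r; rewrite ?nnegrE ?expR_ge0.
move=> h2; have := le_trans h2 e8.
rewrite !exprS expr0 !mulr1.
lra.
Qed.

Lemma kk_step (R : realType) (k : nat) : ((k.+1) ^ k <= 3 * k ^ k)%N.
Proof.
case: k => [|k] //.
rewrite -(@ler_nat R) natrM !natrX.
set m := k.+1.
have m0 : (0 : R) < m%:R by rewrite ltr0n.
have -> : (m.+1%:R : R) = m%:R * (1 + m%:R^-1).
  by rewrite mulrDr mulr1 mulfV ?gt_eqF // -natr1.
rewrite exprMn mulrC ler_pM2r ?exprn_gt0 //.
apply: (le_trans _ (e_le3 _)).
rewrite -[X in _ <= expR X](@mulfV _ m%:R) ?gt_eqF // expRM_natl.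
apply: lerXn2r; rewrite ?nnegrE ?expR_ge0 ?expR_ge1Dx //.
Qed.

Lemma kk_fact (R : realType) (k : nat) : (k ^ k <= 3 ^ k * k`!)%N.
Proof.
elim: k => [|k IH] //.
rewrite expnS factS expnS.
apply: (leq_trans (leq_mul (leqnn _) (kk_step R k))).
apply: (leq_trans (leq_mul (leqnn _) (leq_mul (leqnn 3) IH))).
have -> : (k.+1 * (3 * (3 ^ k * k`!)) = 3 * 3 ^ k * (k.+1 * k`!))%N by ring.
by [].
Qed.

Lemma base_le (R : realType) (D : nat) (x : R) : (21 <= D)%N ->
  3 * ln (D%:R : R) / D%:R <= x -> x <= 1 ->
  9 / x ^+ 2 * D%:R * (1 - x) ^+ D.-1 <= expR (8 / 7) / 4.
Proof.
move=> hD hx x1.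
set d : R := D%:R; set L := ln d.
have d21 : 21 <= d by rewrite /d -(ler_nat R 21) in hD.
have d0 : 0 < d by lra.
have hL2 : 2 <= L := ln_ge2 R D hD.
have hLu : L <= 8 * d / 21 := ln_le R D hD.
set a := 3 * L / d.
have hxa : a <= x := hx.
have a0 : 0 < a by rewrite /a divr_gt0 //; lra.
have x0 : 0 < x by apply: lt_le_trans hx.
have dL : expR L = d by rewrite /L lnK // posrE.
have h1 : (1 - x) ^+ D.-1 <= expR (D.-1%:R * (- a)).
  apply: (@le_trans _ _ (expR (- x) ^+ D.-1)).
    apply: lerXn2r; rewrite ?nnegrE ?expR_ge0 //; first lra.
    by have := expR_ge1Dx (- x); rewrite addrC.
  rewrite -expRM_natl ler_expR; apply: ler_wpM2l; first by [].
  by rewrite lerN2.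
have h2 : (D.-1%:R : R) = d - 1.
  rewrite /d; have -> : D = D.-1.+1 by lia. by rewrite -natr1 addrK.
have h3 : expR (D.-1%:R * (- a)) = expR (3 * L / d) / d ^+ 3.
  rewrite h2 /a (_ : (d - 1) * - (3 * L / d) = 3 * L / d - 3%:R * L); last by field; lra.
  by rewrite expRB expRM_natl dL.
have h4 : 9 / x ^+ 2 <= d ^+ 2 / L ^+ 2.
  have -> : d ^+ 2 / L ^+ 2 = 9 / a ^+ 2 by rewrite /a; field; lra.
  rewrite ler_pM2l //; rewrite lef_pV2 ?posrE ?exprn_gt0 //.
  by apply: lerXn2r; rewrite ?nnegrE; lra.
apply: (@le_trans _ _ (d ^+ 2 / L ^+ 2 * d * (expR (3 * L / d) / d ^+ 3))).
  rewrite -h3; apply: ler_pM.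
  - by rewrite mulr_ge0 // ?divr_ge0 // ?exprn_ge0 //; lra.
  - by apply: exprn_ge0; lra.
  - by rewrite ler_pM2r.
  - exact: h1.
have -> : d ^+ 2 / L ^+ 2 * d * (expR (3 * L / d) / d ^+ 3) = expR (3 * L / d) / L ^+ 2.
  by field; lra.
apply: ler_pM; rewrite ?expR_ge0 ?invr_ge0 ?exprn_ge0 //; try lra.
  rewrite ler_expR ler_pdivrMr //; lra.
rewrite lef_pV2 ?posrE ?exprn_gt0 //; try lra.
rewrite (_ : 4 = 2 ^+ 2); last by rewrite expr2; lra.
by apply: lerXn2r; rewrite ?nnegrE; lra.
Qed.

Lemma eqle (R : numDomainType) (a b : R) : a = b -> a <= b.
Proof. by move->. Qed.

Lemma ffact_le_exp n k : (n ^_ k <= n ^ k)%N.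
Proof.
elim: k => [|k IH] //; rewrite ffactnSr expnSr; apply: leq_mul => //; exact: leq_subr.
Qed.

Lemma bin_bound (R : realType) n k : ('C(n, k) * k ^ k <= 3 ^ k * n ^ k)%N.
Proof.
apply: (@leq_trans ('C(n, k) * (3 ^ k * k`!))); first by rewrite leq_mul2l (kk_fact R) orbT.
rewrite mulnCA bin_ffact leq_mul2l ffact_le_exp ?orbT //.
Qed.

Lemma main_real (R : realType) (D n k : nat) : (21 <= D)%N -> (1 <= k)%N -> (k <= n)%N ->
  3 * n%:R * ln (D%:R : R) / D%:R <= k%:R ->
  ('C(n, k) * ('C(n, k) * D ^ k))%:R * (((n * D - k * D)%:R / (n * D)%:R) ^+ (k * D - k))
  <= (expR (8 / 7) / 4 : R) ^+ k.
Proof.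
move=> hD k1 kn hk.
set d : R := D%:R.
have d0 : 0 < d by rewrite /d ltr0n; lia.
have n0 : (0 : R) < n%:R by rewrite ltr0n; lia.
have k0 : (0 : R) < k%:R by rewrite ltr0n; lia.
set x : R := k%:R / n%:R.
have x0 : 0 < x by rewrite /x divr_gt0.
have x1 : x <= 1 by rewrite /x ler_pdivrMr // mul1r ler_nat.
have hx : 3 * ln d / d <= x.
  rewrite /x ler_pdivlMr //; apply: le_trans hk; rewrite /d; apply: eqle; field; lra.
have E1 : (n * D - k * D)%:R / (n * D)%:R = 1 - x :> R.
  rewrite natrB ?leq_mul2r ?kn ?orbT // !natrM /x -/d; field; lra.
have E2 : (k * D - k = D.-1 * k)%N by rewrite -subn1 mulnBl mul1n mulnC.
have C1 : ('C(n, k)%:R : R) <= (3 / x) ^+ k.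
  have := bin_bound R n k; rewrite -(ler_nat R) natrM !natrX => H.
  have -> : 3 / x = (3 * n%:R) / k%:R by rewrite /x; field; lra.
  rewrite expr_div_n ler_pdivlMr ?exprn_gt0 //; apply: le_trans H _; rewrite exprMn.
  by rewrite natrM !natrX.
rewrite E1 E2 exprM !natrM natrX -!mulrA.
have B := @base_le R D x hD hx x1.
apply: (@le_trans _ _ ((3 / x) ^+ k * ((3 / x) ^+ k * (d ^+ k * ((1 - x) ^+ D.-1) ^+ k)))).
  have Y0 : 0 <= d ^+ k * ((1 - x) ^+ D.-1) ^+ k.
    by rewrite mulr_ge0 // exprn_ge0 // exprn_ge0 //; lra.
  rewrite -/d; apply: ler_pM => //; first by rewrite mulr_ge0.
  by apply: ler_wpM2r.
rewrite !mulrA -!exprMn; apply: lerXn2r; rewrite ?nnegrE.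
- have : 0 < 3 / x by rewrite divr_gt0.
  move=> h; rewrite !mulr_ge0 ?exprn_ge0 //; try lra.
- by rewrite divr_ge0 ?expR_ge0.
apply: le_trans B; apply: eqle; rewrite /d; field; lra.
Qed.

Lemma prop_bound (R : realType) D n (r0 : 'I_D) : (0 < n)%N ->
  @proportion R D n <= ('C(n, @kk R D n) * ('C(n, @kk R D n) * D ^ @kk R D n))%:R *
     (((n * D - @kk R D n * D)%:R / (n * D)%:R) ^+ (@kk R D n * D - @kk R D n)).
Proof.
move=> n0; rewrite /proportion; set k := @kk R D n.
have D0 : (0 < D)%N := leq_ltn_trans (leq0n _) (ltn_ord r0).
have H := @count_bound D n k r0 n0.
set G := #|_| in H *.
rewrite -(ler_nat R) !natrM !natrX in H.
set N := n * D in H *.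
have N0 : (0 : R) < N%:R by rewrite ltr0n muln_gt0 n0 D0.
have F0 : (0 : R) < N`!%:R by rewrite ltr0n fact_gt0.
have P0 : (0 : R) < N%:R ^+ (k * D - k) by rewrite exprn_gt0.
rewrite ler_pdivrMr // expr_div_n.
rewrite mulrA mulrAC ler_pdivlMr // !natrM natrX !mulrA.
by move: H; rewrite !mulrA [(n * D)%:R]natrM.
Qed.

Lemma kk_facts (R : realType) D n : (21 <= D)%N -> (0 < n)%N ->
  [/\ 3 * n%:R * ln (D%:R : R) / D%:R <= (@kk R D n)%:R, (1 <= @kk R D n)%N
    & (n <= @kk R D n * D)%N].
Proof.
move=> hD n0.
set z : R := 3 * n%:R * ln (D%:R : R) / D%:R.
have d0 : (0 : R) < D%:R by rewrite ltr0n; lia.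
have n0' : (1 : R) <= n%:R by rewrite (_ : 1 = 1%:R) // ler_nat.
have L2 := ln_ge2 R D hD.
have z0 : 0 < z by rewrite /z divr_gt0 // !mulr_gt0 //; lra.
have kz : z <= (@kk R D n)%:R.
  rewrite /kk -/z natr_absz ger0_norm; first exact: ceil_ge.
  by rewrite ceil_ge0; lra.
split => //.
- by rewrite -(ltr0n R); apply: lt_le_trans kz.
- rewrite -(ler_nat R) natrM.
  apply: (@le_trans _ _ (z * D%:R)); last by rewrite ler_pM2r.
  rewrite /z mulrAC -mulrA mulfV ?gt_eqF // mulr1; nra.
Qed.

Local Open Scope classical_set_scope.
Local Open Scope ring_scope.

Theorem lemma4p4 (R : realType) (D : nat) (hD : (21 <= D)%N) :
  (fun n : nat => @proportion R D n) @ \oo --> (0 : R).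
Proof.
have D0 : (0 < D)%N by lia.
pose r0 : 'I_D := Ordinal D0.
set th : R := expR (8 / 7) / 4.
have th0 : 0 <= th by rewrite divr_ge0 ?expR_ge0.
have th1 : th < 1 by rewrite ltr_pdivrMr //; have := exp87 R; lra.
have key : forall n, (0 < n)%N -> @proportion R D n <= th ^+ (@kk R D n).
  move=> n n0; have [hk k1 knD] := kk_facts R D n hD n0.
  apply: le_trans (prop_bound R D n r0 n0) _.
  case: (leqP (@kk R D n) n) => kn.
    exact: main_real.
  rewrite bin_small // mul0n mul0r; exact: exprn_ge0.
apply/cvgrPdist_lt => e e0.
have tha : `|th| < 1 by rewrite ger0_norm.
have := cvg_expr tha => /cvgrPdist_lt /(_ e e0) [K _ HK].
exists (K * D).+1 => // n /= Hn.
have n0 : (0 < n)%N by lia.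
have [_ _ knD] := kk_facts R D n hD n0.
have KK : (K <= @kk R D n)%N.
  have : (K * D < @kk R D n * D)%N by lia.
  by rewrite ltn_mul2r => /andP [_ /ltnW].
have p0 : 0 <= @proportion R D n by rewrite /proportion divr_ge0.
rewrite sub0r normrN ger0_norm //.
apply: le_lt_trans (key n n0) _.
apply: le_lt_trans (HK K (leqnn K)); rewrite sub0r normrN ger0_norm ?exprn_ge0 //.
rewrite -(subnKC KK) exprD; apply: ler_piMr; rewrite ?exprn_ge0 ?exprn_ile1 //.
by apply: ltW.
Qed.
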